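(* Let $S$ be an inverse semigroup and $\rho$ an idempotent separating congruence on $S$. Then there exist a group $G$ and an action of $T=S/\rho$ on $G$ by endomorphisms on the left such that the extension $(S,\rho)$ can be embedded into the $\lambda$-semidirect product extension $(G\rtimes_\lambda T,\vartheta_2)$, i.e. there is an injective homomorphism $\psi\colon S\to G\rtimes_\lambda T$ such that the congruence induced on $S$ by $\psi$ followed by the second projection $G\rtimes_\lambda T\to T$ is exactly $\rho$.
   Context: A congruence is idempotent separating if no two distinct idempotents are related. Let $K$ be a semigroup and $T$ an inverse semigroup; $T$ acts on $K$ if an antihomomorphism $t\mapsto\varepsilon_t$ from $T$ into the endomorphism monoid of $K$ is given (so $\varepsilon_u\varepsilon_t=\varepsilon_{tu}$); write ${}^t a$ for $a\varepsilon_t$. The $\lambda$-semidirect product $K\rtimes_\lambda T$ is the set $\{(a,t)\in K\times T: {}^{tt^{-1}}a=a\}$ with multiplication $(a,t)(b,u)=({}^{(tu)(tu)^{-1}}a\cdot {}^t b,\ tu)$, and $\vartheta_2$ is the congruence induced by the second projection $(a,t)\mapsto t$. *)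

(* Defs.v *)
From Stdlib Require Import ClassicalEpsilon.
Set Implicit Arguments.

(* An inverse semigroup: a regular semigroup (with a chosen inverse x^-1,
   x x^-1 x = x, x^-1 x x^-1 = x^-1) whose idempotents commute.
   (Equivalently: every element has a unique inverse.) *)
Record InvSemigroup := {
  is_car :> Type;
  is_mul : is_car -> is_car -> is_car;
  is_inv : is_car -> is_car;
  is_assoc : forall x y z, is_mul x (is_mul y z) = is_mul (is_mul x y) z;
  is_inv_l : forall x, is_mul (is_mul x (is_inv x)) x = x;
  is_inv_r : forall x, is_mul (is_mul (is_inv x) x) (is_inv x) = is_inv x;
  is_idem_comm : forall e f, is_mul e e = e -> is_mul f f = f ->
                   is_mul e f = is_mul f e
}.

Record Group := {
  g_car :> Type;
  g_mul : g_car -> g_car -> g_car;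
  g_one : g_car;
  g_inv : g_car -> g_car;
  g_assoc : forall x y z, g_mul x (g_mul y z) = g_mul (g_mul x y) z;
  g_one_l : forall x, g_mul g_one x = x;
  g_inv_l : forall x, g_mul (g_inv x) x = g_one
}.

Section Defs.
Variable S : InvSemigroup.
Local Notation "x * y" := (is_mul S x y).

Definition is_congruence (rho : S -> S -> Prop) : Prop :=
  (forall a, rho a a) /\
  (forall a b, rho a b -> rho b a) /\
  (forall a b c, rho a b -> rho b c -> rho a c) /\
  (forall a b c, rho a b -> rho (c * a) (c * b) /\ rho (a * c) (b * c)).

Definition idempotent (e : S) : Prop := e * e = e.

Definition idempotent_separating (rho : S -> S -> Prop) : Prop :=
  forall e f, idempotent e -> idempotent f -> rho e f -> e = f.

(* The quotient S / rho: the set of rho-classes, with the induced operations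
   (computed on chosen representatives; well defined when rho is a congruence). *)
Definition quot (rho : S -> S -> Prop) : Type :=
  { A : S -> Prop | exists s, A = rho s }.

Definition qcls (rho : S -> S -> Prop) (s : S) : quot rho :=
  exist _ (rho s) (ex_intro _ s eq_refl).

Definition qrep (rho : S -> S -> Prop) (A : quot rho) : S :=
  proj1_sig (constructive_indefinite_description _ (proj2_sig A)).

Definition qmul (rho : S -> S -> Prop) (A B : quot rho) : quot rho :=
  qcls rho (qrep A * qrep B).

Definition qinv (rho : S -> S -> Prop) (A : quot rho) : quot rho :=
  qcls rho (is_inv S (qrep A)).

End Defs.

(* A left action of T (with multiplication tmul) on the group G by
   endomorphisms: t |-> act t is an antihomomorphism into End(G) for
   right-written composition, i.e. act t (act u a) = act (t u) a. *)
Definition is_action (G : Group) (T : Type) (tmul : T -> T -> T)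
    (act : T -> G -> G) : Prop :=
  (forall t a b, act t (g_mul G a b) = g_mul G (act t a) (act t b)) /\
  (forall t u a, act t (act u a) = act (tmul t u) a).

Definition in_lsd (G : Group) (T : Type) (tmul : T -> T -> T) (tinv : T -> T)
    (act : T -> G -> G) (p : G * T) : Prop :=
  act (tmul (snd p) (tinv (snd p))) (fst p) = fst p.

Definition lsd_mul (G : Group) (T : Type) (tmul : T -> T -> T) (tinv : T -> T)
    (act : T -> G -> G) (p q : G * T) : G * T :=
  let tu := tmul (snd p) (snd q) in
  (g_mul G (act (tmul tu (tinv tu)) (fst p)) (act (snd p) (fst q)), tu).

(* Main.v *)
Require Import Defs.
From Stdlib Require Import ClassicalEpsilon FunctionalExtensionality PropExtensionality ProofIrrelevance.
Set Implicit Arguments.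

Section IS.
Context {S : InvSemigroup}.
Local Notation "x * y" := (is_mul S x y).
Local Notation iv := (is_inv S).

Lemma A (x y z : S) : (x*y)*z = x*(y*z).
Proof. symmetry; apply is_assoc. Qed.
Ltac nf := repeat rewrite A.

Definition ran (x : S) := x * iv x.
Definition dom (x : S) := iv x * x.
Definition idem (e : S) := e * e = e.

Lemma ran_x x : ran x * x = x.
Proof. apply is_inv_l. Qed.
Lemma ran_xt x z : ran x * (x * z) = x * z.
Proof. rewrite <- A, ran_x; auto. Qed.
Lemma x_dom x : x * dom x = x.
Proof. unfold dom; rewrite is_assoc; apply is_inv_l. Qed.
Lemma x_domt x z : x * (dom x * z) = x * z.
Proof. rewrite <- A, x_dom; auto. Qed.
Lemma dom_i x : dom x * iv x = iv x.
Proof. apply is_inv_r. Qed.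
Lemma dom_it x z : dom x * (iv x * z) = iv x * z.
Proof. rewrite <- A, dom_i; auto. Qed.
Lemma i_ran x : iv x * ran x = iv x.
Proof. unfold ran; rewrite is_assoc; apply is_inv_r. Qed.
Lemma i_rant x z : iv x * (ran x * z) = iv x * z.
Proof. rewrite <- A, i_ran; auto. Qed.

Lemma idem_ran x : idem (ran x).
Proof. unfold idem. unfold ran at 2. rewrite <- A, ran_x. reflexivity. Qed.
Lemma idem_dom x : idem (dom x).
Proof. unfold idem. unfold dom at 2. rewrite <- A, dom_i. reflexivity. Qed.

Lemma idem_t e z : idem e -> e * (e * z) = e * z.
Proof. intro H; rewrite <- A, H; auto. Qed.

Lemma comm e f : idem e -> idem f -> e * f = f * e.
Proof. intros; apply is_idem_comm; auto. Qed.
Lemma commt e f z : idem e -> idem f -> e * (f * z) = f * (e * z).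
Proof. intros; rewrite <- !A, (comm H H0); auto. Qed.

Lemma inv_unique x y : x * (y * x) = x -> y * (x * y) = y -> y = iv x.
Proof.
  intros H1 H2.
  assert (Ixy : idem (x * y)) by (unfold idem; rewrite A, H2; auto).
  assert (Iyx : idem (y * x)) by (unfold idem; rewrite A, H1; auto).
  assert (E1 : y = dom x * y).
  { transitivity ((y*x)*(dom x*y)).
    - rewrite A, x_domt, H2; auto.
    - rewrite <- A, (comm Iyx (idem_dom x)), !A, H2; auto. }
  assert (E2 : y = y * ran x).
  { transitivity (y*(ran x*(x*y))).
    - rewrite ran_xt, H2; auto.
    - rewrite (comm (idem_ran x) Ixy), <- A, H2; auto. }
  transitivity (dom x * (y * ran x)).
  - rewrite <- E2. exact E1.
  - unfold dom, ran. nf. rewrite (is_assoc S y x), (is_assoc S x (y*x)), H1.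
    fold (ran x). apply i_ran.
Qed.

Lemma ranT y z : y * (iv y * z) = ran y * z.
Proof. unfold ran; rewrite A; auto. Qed.
Lemma domT y z : iv y * (y * z) = dom y * z.
Proof. unfold dom; rewrite A; auto. Qed.

Lemma inv_inv x : iv (iv x) = x.
Proof.
  symmetry; apply inv_unique.
  - fold (ran x); apply i_ran.
  - rewrite <- A; apply ran_x.
Qed.

Lemma inv_mul x y : iv (x * y) = iv y * iv x.
Proof.
  symmetry; apply inv_unique.
  - nf. rewrite ranT, domT, (commt _ (idem_ran y) (idem_dom x)), x_domt, ran_x; auto.
  - nf. rewrite domT, ranT, (commt _ (idem_dom x) (idem_ran y)), i_rant, dom_i; auto.
Qed.

Lemma idem_inv e : idem e -> iv e = e.
Proof. intro H; symmetry; apply inv_unique; rewrite !H; auto. Qed.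
Lemma idem_ran_eq e : idem e -> ran e = e.
Proof. intro H; unfold ran; rewrite idem_inv; auto. Qed.
Lemma idem_dom_eq e : idem e -> dom e = e.
Proof. intro H; unfold dom; rewrite idem_inv; auto. Qed.

Lemma ran_mul x y : ran (x * y) = x * (ran y * iv x).
Proof. unfold ran; rewrite inv_mul; nf; auto. Qed.
Lemma dom_mul x y : dom (x * y) = iv y * (dom x * y).
Proof. unfold dom; rewrite inv_mul; nf; auto. Qed.
Lemma ran_inv x : ran (iv x) = dom x.
Proof. unfold ran, dom; rewrite inv_inv; auto. Qed.
Lemma dom_inv x : dom (iv x) = ran x.
Proof. unfold ran, dom; rewrite inv_inv; auto. Qed.

End IS.
Arguments ran {S}. Arguments dom {S}. Arguments idem {S}.

Section Cong.
Variable S : InvSemigroup.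
Variable rho : S -> S -> Prop.
Hypothesis Hcong : @is_congruence S rho.
Hypothesis Hsep : @idempotent_separating S rho.
Local Notation "x * y" := (is_mul S x y).
Local Notation iv := (is_inv S).
Ltac nf := repeat rewrite A.

Lemma rrefl a : rho a a. Proof. apply (proj1 Hcong). Qed.
Lemma rsym a b : rho a b -> rho b a. Proof. apply (proj1 (proj2 Hcong)). Qed.
Lemma rtrans a b c : rho a b -> rho b c -> rho a c. Proof. apply (proj1 (proj2 (proj2 Hcong))). Qed.
Lemma rmulL c a b : rho a b -> rho (c * a) (c * b). Proof. intro H; apply (proj2 (proj2 (proj2 Hcong)) _ _ c H). Qed.
Lemma rmulR c a b : rho a b -> rho (a * c) (b * c). Proof. intro H; apply (proj2 (proj2 (proj2 Hcong)) _ _ c H). Qed.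
Lemma rmul a b c d : rho a b -> rho c d -> rho (a * c) (b * d).
Proof. intros; eapply rtrans; [apply rmulL; eauto | apply rmulR; auto]. Qed.

Lemma sep e f : idem e -> idem f -> rho e f -> e = f.
Proof. apply Hsep. Qed.

Lemma idem_mul e f : idem e -> idem f -> idem (e * f).
Proof. unfold idem; intros He Hf. nf. rewrite (commt _ Hf He), <- A, He, Hf; auto. Qed.

Lemma ran_aux a b : rho a b -> ran a * ran b = ran b.
Proof.
  intro H. apply sep. apply idem_mul; apply idem_ran. apply idem_ran.
  eapply rtrans. apply rmulL. apply rmulR. apply rsym, H.
  rewrite ran_xt. apply rmulR, H.
Qed.
Lemma rho_ran a b : rho a b -> ran a = ran b.
Proof.
  intro H. transitivity (ran b * ran a). symmetry; apply ran_aux, rsym, H.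
  rewrite (comm (idem_ran b) (idem_ran a)). apply ran_aux, H.
Qed.
Lemma dom_aux a b : rho a b -> dom a * dom b = dom a.
Proof.
  intro H. apply sep. apply idem_mul; apply idem_dom. apply idem_dom.
  unfold dom at 1 2. nf. eapply rtrans. apply rmulL, rmulR, H.
  fold (dom b). rewrite x_dom. unfold dom. apply rmulL, rsym, H.
Qed.
Lemma rho_dom a b : rho a b -> dom a = dom b.
Proof.
  intro H. transitivity (dom a * dom b). symmetry; apply dom_aux, H.
  rewrite (comm (idem_dom a) (idem_dom b)). apply dom_aux, rsym, H.
Qed.
Lemma rho_inv a b : rho a b -> rho (iv a) (iv b).
Proof.
  intro H. rewrite <- (i_ran a), (rho_ran H).
  unfold ran. eapply rtrans. apply rmulL, rmulR, rsym, H.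
  rewrite <- A. fold (dom a). rewrite (rho_dom H). rewrite dom_i. apply rrefl.
Qed.

Local Notation T := (@quot S rho).
Local Notation r := (@qrep S rho).
Local Notation cls := (@qcls S rho).
Local Notation qm := (@qmul S rho).
Local Notation qi := (@qinv S rho).

Lemma sig_eq (X : Type) (P : X -> Prop) (x y : sig P) : proj1_sig x = proj1_sig y -> x = y.
Proof. destruct x, y; simpl; intros ->; f_equal; apply proof_irrelevance. Qed.

Lemma cls_eq a b : rho a b -> cls a = cls b.
Proof.
  intro H. apply sig_eq; simpl. extensionality z. apply propositional_extensionality.
  split; intro; eapply rtrans; eauto using rsym.
Qed.
Lemma cls_eq_inv a b : cls a = cls b -> rho a b.
Proof.
  intro H. apply (f_equal (@proj1_sig _ _)) in H. simpl in H.
  rewrite H. apply rrefl.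
Qed.
Lemma cls_r (X : T) : cls (r X) = X.
Proof.
  apply sig_eq. unfold qrep. destruct (constructive_indefinite_description _ _) as [s Hs].
  simpl. symmetry; exact Hs.
Qed.
Lemma r_cls s : rho (r (cls s)) s.
Proof. apply cls_eq_inv. rewrite cls_r. reflexivity. Qed.
Lemma qm_cls a b : qm (cls a) (cls b) = cls (a * b).
Proof. unfold qmul. apply cls_eq. apply rmul; apply r_cls. Qed.
Lemma qi_cls a : qi (cls a) = cls (iv a).
Proof. unfold qinv. apply cls_eq. apply rho_inv, r_cls. Qed.
Lemma r_qm X Y : rho (r (qm X Y)) (r X * r Y).
Proof. apply r_cls. Qed.
Lemma r_qi X : rho (r (qi X)) (iv (r X)).
Proof. apply r_cls. Qed.
Lemma qassoc X Y Z : qm (qm X Y) Z = qm X (qm Y Z).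
Proof.
  rewrite <- (cls_r X), <- (cls_r Y), <- (cls_r Z), !qm_cls, A; auto.
Qed.


Definition Dl (a b : S) : Prop := dom a * ran b = dom a.

Lemma shiftS a b : Dl a b -> a * (ran b * iv a) = ran a.
Proof.
  unfold Dl; intro H. rewrite <- (x_domt a (ran b * iv a)), <- (A (dom a)), H, x_domt. reflexivity.
Qed.

Lemma Dl_x a b : Dl a b -> a * ran b = a.
Proof. unfold Dl; intro H. rewrite <- (x_dom a) at 1. rewrite A, H. apply x_dom. Qed.

Lemma Dl_comp a b c : Dl a (b * c) <-> Dl a b /\ Dl (a * b) c.
Proof.
  unfold Dl. rewrite ran_mul, dom_mul. set (p := dom a).
  assert (Ip : idem p) by apply idem_dom.
  split.
  - intro H. split.
    + rewrite <- H at 1. nf. rewrite i_ran. exact H.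
    + nf. rewrite <- H at 2. nf. fold (dom b).
      rewrite (comm (idem_ran c) (idem_dom b)), x_domt. reflexivity.
  - intros [H1 H2].
    assert (H2t : forall z, iv b * (p * (b * (ran c * z))) = iv b * (p * (b * z))).
    { intro z. transitivity ((iv b * (p * b)) * ran c * z). nf; auto.
      rewrite H2; nf; auto. }
    transitivity (ran b * (p * (b * (ran c * iv b)))).
    + rewrite (commt _ (idem_ran b) Ip), ran_xt. reflexivity.
    + unfold ran at 1. rewrite A, H2t, ranT. fold (ran b).
      rewrite (commt _ (idem_ran b) Ip), idem_ran. exact H1.
Qed.

Lemma rho_Dl a a' b b' : rho a a' -> rho b b' -> Dl a b -> Dl a' b'.
Proof. unfold Dl; intros H1 H2. rewrite (rho_dom H1), (rho_ran H2). auto. Qed.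

Definition eu (u : T) : S := ran (r u).
Definition D (u t : T) : Prop := Dl (r u) (r t).

Lemma e_shift u t : D u t -> eu (qm u t) = eu u.
Proof.
  unfold D, eu; intro H. rewrite (rho_ran (r_qm u t)), ran_mul. apply shiftS, H.
Qed.

Lemma D_comp u t v : D u (qm t v) <-> D u t /\ D (qm u t) v.
Proof.
  pose proof (Dl_comp (r u) (r t) (r v)) as K.
  unfold D, Dl in *. rewrite (rho_ran (r_qm t v)), (rho_dom (r_qm u t)). exact K.
Qed.

Lemma ran_ran (x : S) : ran (ran x) = ran x.
Proof. apply idem_ran_eq, idem_ran. Qed.

Lemma D_tt u t : D u (qm t (qi t)) <-> D u t.
Proof.
  unfold D, Dl. rewrite (rho_ran (r_qm t (qi t))).
  assert (E : ran (r t * r (qi t)) = ran (r t)).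
  { rewrite (rho_ran (rmulL (r t) (r_qi t))). fold (ran (r t)). apply ran_ran. }
  rewrite E. tauto.
Qed.

Lemma T_id u t : D u t -> qm u (qm t (qi t)) = u.
Proof.
  unfold D; intro H. unfold qmul at 1. rewrite <- (cls_r u) at 2. apply cls_eq.
  eapply rtrans. apply rmulL. eapply rtrans. apply r_qm. apply rmulL. apply r_qi.
  fold (ran (r t)). rewrite (Dl_x H). apply rrefl.
Qed.


Definition Gc := {f : T -> S | forall u, rho (f u) (eu u)}.

Lemma N_ran n u : rho n (eu u) -> ran n = eu u.
Proof. intro H. rewrite (rho_ran H). unfold eu. apply ran_ran. Qed.
Lemma N_dom n u : rho n (eu u) -> dom n = eu u.
Proof. intro H. rewrite (rho_dom H). unfold eu. apply idem_dom_eq, idem_ran. Qed.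

Lemma gmul_ok (f g : Gc) u : rho (proj1_sig f u * proj1_sig g u) (eu u).
Proof.
  rewrite <- (idem_ran (r u)). fold (eu u). apply rmul; [apply (proj2_sig f) | apply (proj2_sig g)].
Qed.
Definition gmul (f g : Gc) : Gc := exist (fun h => forall u, rho (h u) (eu u)) (fun u => proj1_sig f u * proj1_sig g u) (gmul_ok f g) : Gc.
Definition gone : Gc := exist (fun f => forall u, rho (f u) (eu u)) eu (fun u => rrefl (eu u)).
Lemma ginv_ok (f : Gc) u : rho (iv (proj1_sig f u)) (eu u).
Proof.
  assert (E : iv (eu u) = eu u) by (apply idem_inv, idem_ran).
  rewrite <- E. apply rho_inv, (proj2_sig f).
Qed.
Definition ginv (f : Gc) : Gc := exist (fun h => forall u, rho (h u) (eu u)) (fun u => iv (proj1_sig f u)) (ginv_ok f).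

Lemma gassoc x y z : gmul x (gmul y z) = gmul (gmul x y) z.
Proof. apply sig_eq; simpl. extensionality u. apply is_assoc. Qed.
Lemma gone_l x : gmul gone x = x.
Proof.
  apply sig_eq; simpl. extensionality u.
  rewrite <- (@N_ran _ u (proj2_sig x u)). apply ran_x.
Qed.
Lemma ginv_l x : gmul (ginv x) x = gone.
Proof.
  apply sig_eq; simpl. extensionality u. apply (@N_dom _ u (proj2_sig x u)).
Qed.

Definition Grp : Group := {| g_car := Gc; g_mul := gmul; g_one := gone; g_inv := ginv; g_assoc := gassoc; g_one_l := gone_l; g_inv_l := ginv_l |}.

Definition actf (t : T) (f : T -> S) (u : T) : S :=
  match excluded_middle_informative (D u t) with
  | left _ => f (qm u t)
  | right _ => eu u
  end.
Lemma actf_ok (f : Gc) t u : rho (actf t (proj1_sig f) u) (eu u).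
Proof.
  unfold actf. destruct (excluded_middle_informative _) as [H|H].
  - rewrite <- (e_shift H). apply (proj2_sig f).
  - apply rrefl.
Qed.
Definition act (t : T) (f : Grp) : Grp := exist (fun h => forall u, rho (h u) (eu u)) (actf t (proj1_sig f)) (actf_ok f t).

Definition phif (s : S) (u : T) : S :=
  match excluded_middle_informative (D u (cls s)) with
  | left _ => r u * (s * iv (r (qm u (cls s))))
  | right _ => eu u
  end.
Lemma phif_ok s u : rho (phif s u) (eu u).
Proof.
  unfold phif. destruct (excluded_middle_informative _) as [H|H].
  - assert (Hw : rho (r (qm u (cls s))) (r u * s)).
    { eapply rtrans. apply r_qm. apply rmulL, r_cls. }
    eapply rtrans. apply rmulL, rmulL, rho_inv, Hw.
    assert (Hd : Dl (r u) s) by exact (rho_Dl (rrefl _) (r_cls s) H).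
    rewrite inv_mul, ranT, (shiftS Hd). apply rrefl.
  - apply rrefl.
Qed.
Definition phi (s : S) : Grp := exist (fun h => forall u, rho (h u) (eu u)) (phif s) (phif_ok s).
Definition psi (s : S) : Grp * T := (phi s, cls s).


Ltac em_case P := destruct (excluded_middle_informative P).

Lemma act_hom t a b : act t (g_mul Grp a b) = g_mul Grp (act t a) (act t b).
Proof.
  apply sig_eq; simpl. extensionality u. unfold actf.
  destruct (excluded_middle_informative _); auto.
  unfold eu; symmetry; apply idem_ran.
Qed.

Lemma act_comp t v f : act t (act v f) = act (qm t v) f.
Proof.
  apply sig_eq; simpl. extensionality u. unfold actf.
  pose proof (D_comp u t v) as K.
  em_case (D u t); em_case (D (qm u t) v); em_case (D u (qm t v)); try tauto.
  - rewrite qassoc; auto.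
  - apply e_shift; auto.
Qed.

Lemma lsd_ok s : act (qm (cls s) (qi (cls s))) (phi s) = phi s.
Proof.
  apply sig_eq; simpl. extensionality u. unfold actf, phif.
  pose proof (D_tt u (cls s)) as K.
  em_case (D u (qm (cls s) (qi (cls s)))).
  - rewrite (T_id (proj1 K d)). reflexivity.
  - em_case (D u (cls s)); tauto.
Qed.

Lemma psi_hom x y : psi (x * y) = lsd_mul Grp qm qi act (psi x) (psi y).
Proof.
  unfold lsd_mul, psi; simpl. rewrite qm_cls. f_equal.
  apply sig_eq; simpl. extensionality u. unfold actf, phif.
  pose proof (D_tt u (cls (x * y))) as K1.
  pose proof (D_comp u (cls x) (cls y)) as K2. rewrite qm_cls in K2.
  em_case (D u (cls (x * y))).
  - em_case (D u (qm (cls (x * y)) (qi (cls (x * y))))); [|tauto].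
    rewrite (T_id d).
    em_case (D u (cls x)); [|tauto].
    em_case (D (qm u (cls x)) (cls y)); [|tauto].
    rewrite qassoc, qm_cls.
    set (z := iv (r (qm u (cls (x * y))))).
    set (w := r (qm u (cls x))).
    assert (Hw : rho w (r u * x)).
    { eapply rtrans. apply r_qm. apply rmulL, r_cls. }
    nf. rewrite domT, (rho_dom Hw), dom_mul. nf.
    rewrite ranT, (commt _ (idem_ran x) (idem_dom (r u))), x_domt, ran_xt. reflexivity.
  - em_case (D u (qm (cls (x * y)) (qi (cls (x * y))))); [tauto|].
    unfold eu.
    em_case (D u (cls x)).
    + em_case (D (qm u (cls x)) (cls y)); [tauto|].
      fold (eu (qm u (cls x))). rewrite (e_shift d). unfold eu. symmetry; apply idem_ran.
    + symmetry; apply idem_ran.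
Qed.


Lemma psi_inj x y : psi x = psi y -> x = y.
Proof.
  intro H.
  assert (Hc : cls x = cls y) by exact (f_equal snd H).
  assert (Hf : phif x = phif y) by exact (f_equal (fun p => proj1_sig (fst p)) H).
  assert (Hr : rho x y) by exact (cls_eq_inv Hc).
  set (u := cls (ran x)).
  assert (Hu : rho (r u) (ran x)) by apply r_cls.
  assert (Dx : D u (cls x)).
  { unfold D. refine (rho_Dl (rsym Hu) (rsym (r_cls x)) _).
    unfold Dl. rewrite (idem_dom_eq (idem_ran x)). apply idem_ran. }
  assert (Dy : D u (cls y)) by (rewrite <- Hc; exact Dx).
  pose proof (f_equal (fun f => f u) Hf) as E. simpl in E. unfold phif in E.
  em_case (D u (cls x)); [|tauto]. em_case (D u (cls y)); [|tauto].
  rewrite <- Hc in E. set (w := r (qm u (cls x))) in E.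
  assert (Hwx : rho w (r u * x)).
  { eapply rtrans. apply r_qm. apply rmulL, r_cls. }
  assert (Hwy : rho w (r u * y)) by exact (rtrans Hwx (rmulL _ Hr)).
  assert (Hdu : dom (r u) = ran x).
  { rewrite (rho_dom Hu). apply idem_dom_eq, idem_ran. }
  assert (Hxy : ran x = ran y) by exact (rho_ran Hr).
  apply (f_equal (fun z => iv (r u) * z)) in E. rewrite !domT, Hdu in E.
  rewrite ran_xt in E. rewrite Hxy, ran_xt in E.
  apply (f_equal (fun z => z * w)) in E. rewrite !A in E. fold (dom w) in E.
  assert (Ex : x * dom w = x).
  { rewrite (rho_dom Hwx), dom_mul, Hdu, ran_x. apply x_dom. }
  assert (Ey : y * dom w = y).
  { rewrite (rho_dom Hwy), dom_mul, Hdu, Hxy, ran_x. apply x_dom. }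
  rewrite <- Ex, <- Ey. exact E.
Qed.

Lemma main :
  exists (G : Group) (act : @quot S rho -> G -> G),
    is_action G (@qmul S rho) act /\
    exists psi : S -> G * @quot S rho,
      (forall s, in_lsd G (@qmul S rho) (@qinv S rho) act (psi s)) /\
      (forall x y, psi (is_mul S x y) =
                   lsd_mul G (@qmul S rho) (@qinv S rho) act (psi x) (psi y)) /\
      (forall x y, psi x = psi y -> x = y) /\
      (forall x y, snd (psi x) = snd (psi y) <-> rho x y).
Proof.
  exists Grp, act. split.
  - split; [apply act_hom | apply act_comp].
  - exists psi. split; [|split; [|split]].
    + intro s. unfold in_lsd, psi; simpl. apply lsd_ok.
    + apply psi_hom.
    + apply psi_inj.
    + intros x y; simpl. split; [apply cls_eq_inv | apply cls_eq].
Qed.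

End Cong.

Theorem corollary3p3 (S : InvSemigroup) (rho : S -> S -> Prop)
  (Hcong : @is_congruence S rho) (Hsep : @idempotent_separating S rho) :
  exists (G : Group) (act : @quot S rho -> G -> G),
    is_action G (@qmul S rho) act /\
    exists psi : S -> G * @quot S rho,
      (forall s, in_lsd G (@qmul S rho) (@qinv S rho) act (psi s)) /\
      (forall x y, psi (is_mul S x y) =
                   lsd_mul G (@qmul S rho) (@qinv S rho) act (psi x) (psi y)) /\
      (forall x y, psi x = psi y -> x = y) /\
      (forall x y, snd (psi x) = snd (psi y) <-> rho x y).
Proof. exact (@main S rho Hcong Hsep). Qed.
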